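(* Let $D$ be an arc-colored strongly connected tournament on $n\geq 3$ vertices. If $c(D)\geq \frac{n(n-1)}{2}-n+3$, then $D$ contains a rainbow triangle.
   Context: A tournament is obtained from $K_n$ by orienting each edge in exactly one direction; it is strongly connected if for every ordered pair of distinct vertices $x,y$ there is a directed path from $x$ to $y$. An arc-coloring is any map $C:A(D)\to\mathbb{N}$; $c(D)$ is the number of distinct colors used on the arcs. A rainbow triangle is a directed cycle of length 3 whose arcs have pairwise distinct colors. *)

(* Defs.v *)
From mathcomp Require Import all_boot.
Set Implicit Arguments. Unset Strict Implicit. Unset Printing Implicit Defensive.

Definition is_tournament (T : finType) (a : rel T) : Prop :=
  (forall x, ~~ a x x) /\
  (forall x y, x != y -> (a x y || a y x)) /\
  (forall x y, a x y -> ~~ a y x).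

Definition strongly_connected (T : finType) (a : rel T) : Prop :=
  forall x y, connect a x y.

(* arc-colouring C : T -> T -> nat, only its values on arcs matter *)
Definition arcs (T : finType) (a : rel T) : seq (T * T) :=
  enum [pred p : T * T | a p.1 p.2].

Definition num_colors (T : finType) (a : rel T) (C : T -> T -> nat) : nat :=
  size (undup [seq C p.1 p.2 | p <- arcs a]).

Definition has_rainbow_triangle (T : finType) (a : rel T) (C : T -> T -> nat) : Prop :=
  exists x y z : T, [/\ a x y, a y z, a z x &
    [/\ C x y != C y z, C y z != C z x & C x y != C z x]].

(* Main.v *)
Require Import Defs.
From mathcomp Require Import all_boot zify.
Set Implicit Arguments. Unset Strict Implicit. Unset Printing Implicit Defensive.

Definition col (T : finType) (C : T -> T -> nat) (p : T * T) := C p.1 p.2.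
Definition ncs (T : finType) (C : T -> T -> nat) (X : {set T * T}) :=
  size (undup (map (col C) (enum X))).

Lemma ncsU (T : finType) (C : T -> T -> nat) (X Y : {set T * T}) :
  ncs C (X :|: Y) <= ncs C X + #|Y|.
Proof.
rewrite /ncs cardE -(size_map (col C)) -size_cat.
apply: uniq_leq_size; first exact: undup_uniq.
move=> c; rewrite mem_undup mem_cat mem_undup => /mapP [p].
rewrite mem_enum inE => /orP [] Hp ->.
  by rewrite map_f ?mem_enum //.

by rewrite orbC map_f ?mem_enum //.
Qed.

Lemma ncs_sub (T : finType) (C : T -> T -> nat) (X Y : {set T * T}) :
  X \subset Y -> ncs C X <= ncs C Y.
Proof.
move=> /subsetP sXY; rewrite /ncs.
apply: uniq_leq_size; first exact: undup_uniq.
move=> c; rewrite !mem_undup => /mapP [p]; rewrite mem_enum => Hp ->.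
by rewrite map_f ?mem_enum ?sXY.
Qed.

Lemma ncs_red (T : finType) (C : T -> T -> nat) (Z : {set T * T}) q r :
  q \in Z -> r \in Z -> r != q -> col C r = col C q -> ncs C Z <= ncs C (Z :\ q).
Proof.
move=> Hq Hr Hrq Hc; rewrite /ncs.
apply: uniq_leq_size; first exact: undup_uniq.
move=> c; rewrite !mem_undup => /mapP [p]; rewrite mem_enum => Hp ->.
case: (eqVneq p q) => [->|Hpq].
  by rewrite -Hc map_f // mem_enum !inE Hrq.
by rewrite map_f // mem_enum !inE Hpq.
Qed.

Lemma red1 (T : finType) (C : T -> T -> nat) (Z K N : {set T * T}) q r :
  Z \subset K :|: N -> q \in N -> q \in Z -> r \in Z -> r != q ->
  col C r = col C q -> ncs C Z + 1 <= ncs C K + #|N|.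
Proof.
move=> /subsetP sZ HqN HqZ HrZ Hrq Hc.
have H1 := ncs_red HqZ HrZ Hrq Hc.
have H2 : ncs C (Z :\ q) <= ncs C (K :|: (N :\ q)).
  apply: ncs_sub; apply/subsetP => p; rewrite !inE => /andP [Hpq HpZ].
  by move: (sZ p HpZ); rewrite !inE Hpq.
have H3 := ncsU C K (N :\ q).
have H4 : #|N| = (#|N :\ q|).+1 by rewrite (cardsD1 q N) HqN.
rewrite H4; lia.
Qed.

Lemma red2 (T : finType) (C : T -> T -> nat) (Z K N : {set T * T}) q1 r1 q2 r2 :
  Z \subset K :|: N ->
  q2 \in N -> q2 \in Z -> r2 \in Z -> r2 != q2 -> col C r2 = col C q2 ->
  q1 \in N -> q1 != q2 -> q1 \in Z -> r1 \in Z -> r1 != q1 -> r1 != q2 ->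
  col C r1 = col C q1 ->
  ncs C Z + 2 <= ncs C K + #|N|.
Proof.
move=> /subsetP sZ Hq2N Hq2Z Hr2Z Hr2q Hc2 Hq1N Hq12 Hq1Z Hr1Z Hr1q Hr12 Hc1.
have H1 := ncs_red Hq2Z Hr2Z Hr2q Hc2.
have H2 : ncs C (Z :\ q2) + 1 <= ncs C K + #|N :\ q2|.
  apply: (@red1 _ _ _ _ _ q1 r1).
  - apply/subsetP => p; rewrite !inE => /andP [Hpq HpZ].
    by move: (sZ p HpZ); rewrite !inE Hpq.
  - by rewrite !inE Hq12.
  - by rewrite !inE Hq12.
  - by rewrite !inE Hr12.
  - by [].
  - by [].
have H4 : #|N| = (#|N :\ q2|).+1 by rewrite (cardsD1 q2 N) Hq2N.
rewrite H4; lia.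
Qed.

Definition arcsIn (T : finType) (a : rel T) (S : {set T}) : {set T * T} :=
  [set p | [&& a p.1 p.2, p.1 \in S & p.2 \in S]].
Definition relS (T : finType) (a : rel T) (S : {set T}) : rel T :=
  fun x y => [&& a x y, x \in S & y \in S].
Definition strongS (T : finType) (a : rel T) (S : {set T}) :=
  forall x y, x \in S -> y \in S -> connect (relS a S) x y.

Lemma exitP (T : finType) (e : rel T) (X : {set T}) x y :
  connect e x y -> x \in X -> y \notin X ->
  exists u w, [/\ e u w, u \in X & w \notin X].
Proof.
case/connectP => p; elim: p x => [|z p IH] x /=.
  by move=> _ -> ->.
case/andP => exz Hp Hy Hx.
case Hz: (z \in X); first exact: IH Hp Hy Hz.
by exists x, z; rewrite exz Hx Hz.
Qed.

Lemma relS_sub (T : finType) (a : rel T) (S S' : {set T}) x y :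
  S \subset S' -> connect (relS a S) x y -> connect (relS a S') x y.
Proof.
move=> /subsetP sS; apply: connect_sub => u w /and3P [Huw Hu Hw].
by apply: connect1; rewrite /relS Huw !sS.
Qed.

Lemma strong_hub (T : finType) (a : rel T) (S : {set T}) h :
  (forall p, p \in S -> connect (relS a S) p h /\ connect (relS a S) h p) ->
  strongS a S.
Proof.
move=> H x y Hx Hy.
by apply: connect_trans (proj1 (H x Hx)) (proj2 (H y Hy)).
Qed.

Lemma tri_red (T : finType) (a : rel T) (C : T -> T -> nat) u1 u2 u3 :
  (forall x, ~~ a x x) ->
  (forall x y z, a x y -> a y z -> a z x ->
     (C x y == C y z) || (C y z == C z x) || (C x y == C z x)) ->
  a u1 u2 -> a u2 u3 -> a u3 u1 ->
  exists q r, [/\ q = (u1, u2) \/ q = (u3, u1),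
    [\/ r = (u1, u2), r = (u2, u3) | r = (u3, u1)],
    r != q & col C r = col C q].
Proof.
move=> Hirr NR H12 H23 H31.
have n12 : u1 != u2 by apply: contraTneq H12 => ->.
have n23 : u2 != u3 by apply: contraTneq H23 => ->.
have n31 : u3 != u1 by apply: contraTneq H31 => ->.
case/orP: (NR _ _ _ H12 H23 H31) => [/orP [] /eqP E|/eqP E].
- exists (u1, u2), (u2, u3); split; [by left|by constructor 2| |by rewrite /col /= E].
  by apply/eqP => [[]] /eqP; rewrite eq_sym (negbTE n12).
- exists (u3, u1), (u2, u3); split; [by right|by constructor 2| |by rewrite /col /= E].
  by apply/eqP => [[]] /eqP; rewrite (negbTE n23).
- exists (u1, u2), (u3, u1); split; [by left|by constructor 3| |by rewrite /col /= E].
  by apply/eqP => [[]] /eqP; rewrite (negbTE n31).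
Qed.

Lemma extend (T : finType) (a : rel T) (S : {set T}) s0 v0 :
  is_tournament a -> (forall x y, connect a x y) -> strongS a S ->
  s0 \in S -> v0 \notin S ->
  (exists v x y, [/\ v \notin S, x \in S, y \in S & [/\ a v x, a x y & a y v]]) \/
  (exists b c, [/\ b \notin S, c \notin S, a b c &
      forall s, s \in S -> a s b && a c s]).
Proof.
move=> [Hirr [Htot Hasym]] Hstr HS Hs0 Hv0.
case: (boolP [exists v, [exists u, [exists w,
   [&& v \notin S, u \in S, w \in S, a u v & a v w]]]]).
- case/existsP => v /existsP [u /existsP [w /and5P [Hv Hu Hw Huv Hvw]]].
  left.
  pose O := [set x in S | a v x].
  have HwO : w \in O by rewrite inE Hw Hvw.
  have HuO : u \notin O by rewrite inE Hu /= (negbTE (Hasym _ _ Huv)).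
  have [x [y [/and3P [Hxy Hx Hy] HxO HyO]]] := exitP (HS w u Hw Hu) HwO HuO.
  move: HxO HyO; rewrite !inE Hx Hy /= => Hvx Hvy.
  exists v, x, y; split => //.
  have Hyv : y != v by apply: contraTneq Hy => ->.
  by move: (Htot _ _ Hyv); rewrite (negbTE Hvy) orbF.
- move/existsPn => H; right.
  have H' : forall v u w, v \notin S -> u \in S -> w \in S -> a u v -> a v w -> False.
    move=> v u w Hv Hu Hw Huv Hvw; move: (H v) => /existsPn /(_ u) /existsPn /(_ w).
    by rewrite Hv Hu Hw Huv Hvw.
  pose B := [set v | (v \notin S) && [exists s, (s \in S) && a s v]].
  have F1 : forall u, u \in B -> forall s, s \in S -> a s u.
    move=> u; rewrite inE => /andP [HuS /existsP [s' /andP [Hs' Hs'u]]] s Hs.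
    have Hsu : s != u by apply: contraTneq Hs => ->.
    case/orP: (Htot _ _ Hsu) => // Hus.
    by case: (H' u s' s HuS Hs' Hs Hs'u Hus).
  have F2 : forall w, w \notin S -> w \notin B -> forall s, s \in S -> a w s.
    move=> w HwS HwB s Hs.
    have Hsw : s != w by apply: contraTneq Hs => ->.
    case/orP: (Htot _ _ Hsw) => // Hsw'.
    by move: HwB; rewrite inE HwS /=; case/existsP; exists s; rewrite Hs Hsw'.
  have [u [w [Huw HuB HwB]]] : exists u w, [/\ a u w, u \in B & w \notin (S :|: B)].
    case: (boolP (v0 \in B)) => Hv0B.
    - have Hs0B : s0 \notin B by rewrite inE Hs0.
      have [u [w [Huw HuB HwB]]] := exitP (Hstr v0 s0) Hv0B Hs0B.
      exists u, w; split => //; rewrite inE negb_or HwB andbT.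
      apply: contraT; rewrite negbK => HwS.
      by move: (Hasym _ _ Huw); rewrite (F1 _ HuB _ HwS).
    - have Hs0X : s0 \in S :|: B by rewrite inE Hs0.
      have Hv0X : v0 \notin S :|: B by rewrite inE negb_or Hv0 Hv0B.
      have [u [w [Huw HuX HwX]]] := exitP (Hstr s0 v0) Hs0X Hv0X.
      exists u, w; split => //.
      move: HuX; rewrite inE => /orP [] // HuS.
      move: HwX; rewrite !inE negb_or => /andP [HwS]; rewrite HwS /=.
      by case/existsP; exists u; rewrite HuS Huw.
  move: HwB; rewrite inE negb_or => /andP [HwS HwB].
  have HuS : u \notin S by move: HuB; rewrite inE => /andP [].
  exists u, w; split => // s Hs.
  by rewrite (F1 _ HuB _ Hs) (F2 _ HwS HwB _ Hs).
Qed.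

Lemma step1 (T : finType) (a : rel T) (C : T -> T -> nat) (S : {set T}) v x y :
  is_tournament a ->
  (forall x y z, a x y -> a y z -> a z x ->
     (C x y == C y z) || (C y z == C z x) || (C x y == C z x)) ->
  v \notin S -> x \in S -> y \in S -> a v x -> a x y -> a y v ->
  ncs C (arcsIn a (v |: S)) + 1 <= ncs C (arcsIn a S) + #|S|.
Proof.
move=> [Hirr [Htot Hasym]] NR Hv Hx Hy Hvx Hxy Hyv.
pose N := [set (if a z v then (z, v) else (v, z)) | z in S].
have HN : #|N| <= #|S| by apply: leq_imset_card.
have Nvz : forall z, z \in S -> a v z -> (v, z) \in N.
  move=> z Hz Hvz; apply/imsetP; exists z => //.
  by rewrite (negbTE (Hasym _ _ Hvz)).
have Nzv : forall z, z \in S -> a z v -> (z, v) \in N.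
  by move=> z Hz Hzv; apply/imsetP; exists z => //; rewrite Hzv.
have Hsub : arcsIn a (v |: S) \subset arcsIn a S :|: N.
  apply/subsetP => [[p1 p2]]; rewrite !inE /= => /and3P [H12].
  case/orP => [/eqP E1|H1]; case/orP => [/eqP E2|H2].
  - by move: H12; rewrite E1 E2 (negbTE (Hirr v)).
  - by rewrite E1 in H12 *; rewrite Nvz ?orbT.
  - by rewrite E2 in H12 *; rewrite Nzv ?orbT.
  - by rewrite H12 H1 H2.
have inZ : forall p1 p2, a p1 p2 -> p1 \in v |: S -> p2 \in v |: S ->
   (p1, p2) \in arcsIn a (v |: S).
  by move=> p1 p2 H12 H1 H2; rewrite inE /= H12 H1 H2.
have vS : v \in v |: S by rewrite !inE eqxx.
have xS : x \in v |: S by rewrite !inE Hx orbT.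
have yS : y \in v |: S by rewrite !inE Hy orbT.
have [q [r [Hq Hr Hrq Hc]]] := tri_red Hirr NR Hvx Hxy Hyv.
apply: leq_trans (_ : ncs C (arcsIn a S) + #|N| <= _); last by rewrite leq_add2l.
apply: (red1 Hsub _ _ _ Hrq Hc).
- by case: Hq => ->; [apply: Nvz | apply: Nzv].
- by case: Hq => ->; apply: inZ.
- by case: Hr => ->; apply: inZ.
Qed.

Lemma step1_strong (T : finType) (a : rel T) (S : {set T}) v x y :
  strongS a S -> x \in S -> y \in S -> a v x -> a y v -> strongS a (v |: S).
Proof.
move=> HS Hx Hy Hvx Hyv.
have sub : S \subset v |: S by apply/subsetP => z Hz; rewrite !inE Hz orbT.
apply: (@strong_hub _ _ _ x) => p; rewrite !inE => /orP [/eqP ->|Hp].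
  split; first by apply: connect1; rewrite /relS Hvx !inE eqxx Hx orbT.
  apply: connect_trans (relS_sub sub (HS x y Hx Hy)) _.
  by apply: connect1; rewrite /relS Hyv !inE eqxx Hy orbT.
by split; apply: relS_sub sub _; apply: HS.
Qed.

Lemma cardU_le (T : finType) (A B : {set T}) : #|A :|: B| <= #|A| + #|B|.
Proof. by rewrite cardsU leq_subr. Qed.

Definition pairN (T : finType) (S : {set T}) b c : {set T * T} :=
  [set (z, b) | z in S] :|: [set (c, z) | z in S] :|: [set (b, c)].

Lemma pair_common (T : finType) (a : rel T) (S : {set T}) b c :
  is_tournament a -> b \notin S -> c \notin S -> a b c ->
  (forall s, s \in S -> a s b && a c s) ->
  [/\ #|pairN S b c| <= #|S| + #|S| + 1,
      arcsIn a (c |: (b |: S)) \subset arcsIn a S :|: pairN S b c,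
      forall s, s \in S -> (s, b) \in pairN S b c /\ (c, s) \in pairN S b c,
      forall s, s \in S -> [/\ (s, b) \in arcsIn a (c |: (b |: S)),
                (b, c) \in arcsIn a (c |: (b |: S)) &
                (c, s) \in arcsIn a (c |: (b |: S))] &
      #|c |: (b |: S)| = (#|S|).+2].
Proof.
move=> [Hirr [Htot Hasym]] HbS HcS Hbc Hdom.
have Hbc' : b != c by apply: contraTneq Hbc => ->; rewrite (negbTE (Hirr c)).
split.
- rewrite /pairN.
  have h1 := cardU_le ([set (z, b) | z in S] :|: [set (c, z) | z in S]) [set (b, c)].
  have h2 := cardU_le [set (z, b) | z in S] [set (c, z) | z in S].
  have h3 : #|[set (z, b) | z in S]| <= #|S| := leq_imset_card _ _.
  have h4 : #|[set (c, z) | z in S]| <= #|S| := leq_imset_card _ _.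
  rewrite cards1 in h1; apply: leq_trans h1 _; rewrite leq_add2r.
  by apply: leq_trans h2 _; apply: leq_add.
- apply/subsetP => [[p1 p2]]; rewrite !inE /= => /and3P [H12].
  case/or3P => [/eqP E1|/eqP E1|H1]; case/or3P => [/eqP E2|/eqP E2|H2];
    subst => //.
  + by rewrite (negbTE (Hirr _)) in H12.
  + by rewrite (negbTE (Hasym _ _ Hbc)) in H12.
  + by apply/orP; right; apply/orP; left; apply/orP; right; apply/imsetP; exists p2.
  + by rewrite eqxx !orbT.
  + by rewrite (negbTE (Hirr _)) in H12.
  + by move: (Hdom _ H2) => /andP [H _]; rewrite (negbTE (Hasym _ _ H)) in H12.
  + by move: (Hdom _ H1) => /andP [_ H]; rewrite (negbTE (Hasym _ _ H)) in H12.
  + by apply/orP; right; apply/orP; left; apply/orP; left; apply/imsetP; exists p1.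
  + by rewrite H12 H1 H2.
- move=> s Hs; split; rewrite !inE.
  + by apply/orP; left; apply/orP; left; apply/imsetP; exists s.
  + by apply/orP; left; apply/orP; right; apply/imsetP; exists s.
- move=> s Hs; case/andP: (Hdom _ Hs) => Hsb Hcs.
  by rewrite !inE /= Hsb Hbc Hcs Hs !eqxx !orbT.
- rewrite cardsU1 cardsU1 !inE negb_or HbS (negbTE HcS) andbT.
  by rewrite eq_sym Hbc'.
Qed.

Lemma pair_strong (T : finType) (a : rel T) (S : {set T}) b c s1 :
  strongS a S -> s1 \in S -> a b c ->
  (forall s, s \in S -> a s b && a c s) -> strongS a (c |: (b |: S)).
Proof.
move=> HS Hs1 Hbc Hdom.
have sub : S \subset c |: (b |: S) by apply/subsetP => z Hz; rewrite !inE Hz !orbT.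
case/andP: (Hdom _ Hs1) => Hs1b Hcs1.
have E1 : connect (relS a (c |: (b |: S))) c s1.
  by apply: connect1; rewrite /relS Hcs1 !inE eqxx Hs1 !orbT.
have E2 : connect (relS a (c |: (b |: S))) b c.
  by apply: connect1; rewrite /relS Hbc !inE !eqxx !orbT.
have E3 : connect (relS a (c |: (b |: S))) s1 b.
  by apply: connect1; rewrite /relS Hs1b !inE !eqxx Hs1 !orbT.
apply: (@strong_hub _ _ _ s1) => p; rewrite !inE => /or3P [/eqP ->|/eqP ->|Hp].
- by split => //; apply: connect_trans E3 E2.
- by split => //; apply: connect_trans E2 E1.
- by split; apply: relS_sub sub _; apply: HS.
Qed.

Lemma pair_count1 (T : finType) (a : rel T) (C : T -> T -> nat) (S : {set T}) b c s1 :
  is_tournament a ->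
  (forall x y z, a x y -> a y z -> a z x ->
     (C x y == C y z) || (C y z == C z x) || (C x y == C z x)) ->
  b \notin S -> c \notin S -> a b c ->
  (forall s, s \in S -> a s b && a c s) -> s1 \in S ->
  ncs C (arcsIn a (c |: (b |: S))) + 1 <= ncs C (arcsIn a S) + (#|S| + #|S| + 1).
Proof.
move=> Ht NR HbS HcS Hbc Hdom Hs1.
have [HN Hsub HinN HinZ _] := pair_common Ht HbS HcS Hbc Hdom.
have [Hirr _] := Ht.
case/andP: (Hdom _ Hs1) => Hs1b Hcs1.
have [q [r [Hq Hr Hrq Hc]]] := tri_red Hirr NR Hs1b Hbc Hcs1.
apply: leq_trans (_ : _ <= ncs C (arcsIn a S) + #|pairN S b c|) _; last by rewrite leq_add2l.
apply: (red1 Hsub _ _ _ Hrq Hc).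
- by case: (HinN _ Hs1); case: Hq => ->.
- by case: (HinZ _ Hs1); case: Hq => ->.
- by case: (HinZ _ Hs1); case: Hr => ->.
Qed.

Lemma pair_count2 (T : finType) (a : rel T) (C : T -> T -> nat) (S : {set T}) b c s1 s2 :
  is_tournament a ->
  (forall x y z, a x y -> a y z -> a z x ->
     (C x y == C y z) || (C y z == C z x) || (C x y == C z x)) ->
  b \notin S -> c \notin S -> a b c ->
  (forall s, s \in S -> a s b && a c s) -> s1 \in S -> s2 \in S -> s1 != s2 ->
  ncs C (arcsIn a (c |: (b |: S))) + 2 <= ncs C (arcsIn a S) + (#|S| + #|S| + 1).
Proof.
move=> Ht NR HbS HcS Hbc Hdom Hs1 Hs2 H12.
have [HN Hsub HinN HinZ _] := pair_common Ht HbS HcS Hbc Hdom.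
have [Hirr _] := Ht.
case/andP: (Hdom _ Hs1) => Hs1b Hcs1.
case/andP: (Hdom _ Hs2) => Hs2b Hcs2.
have [q1 [r1 [Hq1 Hr1 Hrq1 Hc1]]] := tri_red Hirr NR Hs1b Hbc Hcs1.
have [q2 [r2 [Hq2 Hr2 Hrq2 Hc2]]] := tri_red Hirr NR Hs2b Hbc Hcs2.
have ne : forall x y, x \in S -> y \notin S -> (x == y) = false /\ (y == x) = false.
  move=> x y Hx Hy; split; apply/eqP => E; move: Hy.
    by rewrite -E Hx.
  by rewrite E Hx.
have [e1 e2] := ne _ _ Hs1 HbS. have [e3 e4] := ne _ _ Hs1 HcS.
have [e5 e6] := ne _ _ Hs2 HbS. have [e7 e8] := ne _ _ Hs2 HcS.
have e9 : (s1 == s2) = false by apply: negbTE.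
have e10 : (s2 == s1) = false by rewrite eq_sym; apply: negbTE.
have e11 : (b == c) = false by apply/eqP => E; move: Hbc; rewrite E (negbTE (Hirr c)).
have e12 : (c == b) = false by rewrite eq_sym e11.
apply: leq_trans (_ : _ <= ncs C (arcsIn a S) + #|pairN S b c|) _; last by rewrite leq_add2l.
apply: (red2 Hsub _ _ _ Hrq2 Hc2 _ _ _ _ Hrq1 _ Hc1).
- by case: (HinN _ Hs2); case: Hq2 => ->.
- by case: (HinZ _ Hs2); case: Hq2 => ->.
- by case: (HinZ _ Hs2); case: Hr2 => ->.
- by case: (HinN _ Hs1); case: Hq1 => ->.
- by case: Hq1 => ->; case: Hq2 => ->; rewrite xpair_eqE ?e1 ?e2 ?e3 ?e4 ?e5 ?e6 ?e7 ?e8 ?e9 ?e10 ?e11 ?e12 ?andbF.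
- by case: (HinZ _ Hs1); case: Hq1 => ->.
- by case: (HinZ _ Hs1); case: Hr1 => ->.
- by case: Hr1 => ->; case: Hq2 => ->; rewrite xpair_eqE ?e1 ?e2 ?e3 ?e4 ?e5 ?e6 ?e7 ?e8 ?e9 ?e10 ?e11 ?e12 ?andbF.
Qed.

Lemma bin2S n : 'C(n.+1, 2) = 'C(n, 2) + n.
Proof. by rewrite binS bin1 addnC. Qed.

Lemma grow (T : finType) (a : rel T) (C : T -> T -> nat) :
  is_tournament a ->
  (forall x y z, a x y -> a y z -> a z x ->
     (C x y == C y z) || (C y z == C z x) || (C x y == C z x)) ->
  (forall x y, connect a x y) ->
  forall k (S : {set T}), #|T| - #|S| <= k -> strongS a S -> 3 <= #|S| ->
  ncs C (arcsIn a S) + #|S| <= 'C(#|S|, 2) + 2 ->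
  ncs C (arcsIn a setT) + #|T| <= 'C(#|T|, 2) + 2.
Proof.
move=> Ht NR Hstr; elim=> [|k IH] S Hk HS H3 Hinv.
  have E : S = setT.
    by apply/eqP; rewrite eqEcard subsetT cardsT; lia.
  by rewrite E cardsT in Hinv.
case: (eqVneq S setT) => [E|HneqT].
  by rewrite E cardsT in Hinv.
have [v0 Hv0] : exists v0, v0 \notin S.
  apply/existsP; apply: contraNT HneqT => /existsPn H.
  by apply/eqP/setP => v; rewrite inE; have := H v; rewrite negbK.
have [s0 Hs0] : exists s0, s0 \in S by apply/card_gt0P; lia.
case: (extend Ht Hstr HS Hs0 Hv0).
- move=> [v [x [y [Hv Hx Hy [Hvx Hxy Hyv]]]]].
  have Hc := step1 Ht NR Hv Hx Hy Hvx Hxy Hyv.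
  have Hcard : #|v |: S| = #|S|.+1 by rewrite cardsU1 Hv.
  apply: (IH (v |: S)).
  - by rewrite Hcard; lia.
  - exact: step1_strong HS Hx Hy Hvx Hyv.
  - by rewrite Hcard; lia.
  - rewrite Hcard bin2S; move: Hc Hinv.
    move: (ncs C (arcsIn a (v |: S))) (ncs C (arcsIn a S)) => m1 m2; lia.
- move=> [b [c [HbS HcS Hbc Hdom]]].
  have [_ _ _ _ Hcard] := pair_common Ht HbS HcS Hbc Hdom.
  have [s2 Hs2] : exists s2, s2 \in S :\ s0.
    by apply/card_gt0P; move: (cardsD1 s0 S); rewrite Hs0 /=; lia.
  move: Hs2; rewrite !inE => /andP [Hs20 Hs2].
  have Hc := pair_count2 Ht NR HbS HcS Hbc Hdom Hs2 Hs0 Hs20.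
  apply: (IH (c |: (b |: S))).
  - by rewrite Hcard; lia.
  - exact: pair_strong HS Hs0 Hbc Hdom.
  - by rewrite Hcard; lia.
  - rewrite Hcard !bin2S; move: Hc Hinv.
    move: (ncs C (arcsIn a (c |: (b |: S)))) (ncs C (arcsIn a S)) => m1 m2; lia.
Qed.

Lemma ncs_num (T : finType) (a : rel T) (C : T -> T -> nat) :
  ncs C (arcsIn a setT) = num_colors a C.
Proof.
rewrite /ncs /num_colors /arcs.
rewrite (eq_enum (_ : arcsIn a setT =i [pred p : T * T | a p.1 p.2])).
  by [].
by move=> p; rewrite !inE !andbT.
Qed.

Theorem theorem4 (T : finType) (a : rel T) (C : T -> T -> nat) :
  3 <= #|T| ->
  is_tournament a ->
  strongly_connected a ->
  'C(#|T|, 2) + 3 <= num_colors a C + #|T| ->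
  has_rainbow_triangle a C.
Proof.
move=> Hn Ht Hstr Hcol.
case: (boolP [exists x, [exists y, [exists z, [&& a x y, a y z, a z x,
   C x y != C y z, C y z != C z x & C x y != C z x]]]]).
  case/existsP => x /existsP [y /existsP [z /and5P [H1 H2 H3 H4 /andP [H5 H6]]]].
  by exists x, y, z; split.
move/existsPn => Hno; exfalso.
have NR : forall x y z, a x y -> a y z -> a z x ->
     (C x y == C y z) || (C y z == C z x) || (C x y == C z x).
  move=> x y z Hxy Hyz Hzx.
  move: (Hno x) => /existsPn /(_ y) /existsPn /(_ z).
  rewrite Hxy Hyz Hzx /=.
  by case: (C x y == C y z); case: (C y z == C z x); case: (C x y == C z x).
have [Hirr _] := Ht.
have [x0 _] : exists x0, x0 \in [set: T] by apply/card_gt0P; rewrite cardsT; lia.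
have [v0 Hv0] : exists v0, v0 \in [set~ x0] by apply/card_gt0P; rewrite cardsC1; lia.
have Hv0' : v0 \notin [set x0] by move: Hv0; rewrite !inE.
have Hx0 : x0 \in [set x0] by rewrite inE.
have HS0 : strongS a [set x0].
  by move=> x y; rewrite !inE => /eqP -> /eqP ->; apply: connect0.
case: (extend Ht Hstr HS0 Hx0 Hv0').
  move=> [v [x [y [_ Hx Hy [_ Hxy _]]]]].
  by move: Hx Hy Hxy; rewrite !inE => /eqP -> /eqP ->; rewrite (negbTE (Hirr x0)).
move=> [b [c [HbS HcS Hbc Hdom]]].
have [_ _ _ _ Hcard] := pair_common Ht HbS HcS Hbc Hdom.
have Hc := pair_count1 Ht NR HbS HcS Hbc Hdom Hx0.
have H0 : ncs C (arcsIn a [set x0]) = 0.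
  rewrite /ncs (_ : arcsIn a [set x0] = set0) ?enum_set0 //.
  apply/setP => [[p1 p2]]; rewrite !inE /=.
  case: (eqVneq p1 x0) => [->|]; last by rewrite !andbF.
  case: (eqVneq p2 x0) => [->|]; last by rewrite !andbF.
  by rewrite (negbTE (Hirr x0)).
have Hinv : ncs C (arcsIn a (c |: (b |: [set x0]))) + #|c |: (b |: [set x0])|
   <= 'C(#|c |: (b |: [set x0])|, 2) + 2.
  rewrite Hcard cards1; rewrite H0 cards1 in Hc; move: Hc.
  by rewrite (_ : 'C(3, 2) = 3) //; lia.
have := grow Ht NR Hstr (leqnn _) (pair_strong HS0 Hx0 Hbc Hdom) _ Hinv.
rewrite Hcard cards1 ncs_num => /(_ isT) H; lia.
Qed.
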